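(* Let $\nu\in\mathbb{C}$. The initial equation admits a unique formal fundamental matrix at the origin of the form $\hat\Phi(x,0)=\hat H(x)\,x^{\Lambda}\exp(-Q/x)$ with $Q=\mathrm{diag}(1,2,0)$, $\Lambda=\mathrm{diag}(0,\nu-2,\nu-4)$ and $$\hat H(x)=\begin{pmatrix}1&x^2\hat\varphi(x)&\frac{x^4\hat\psi(x)}2\\0&1&-\frac{x^2}2\\0&0&1\end{pmatrix},$$ where: (1) if $\nu$ is a non-positive integer, $\hat\psi(x)=1+\nu x+\nu(\nu+1)x^2+\dots+(-1)^\nu(-\nu)!\,x^{-\nu}$ and $\hat\varphi(x)=1-\nu x+\nu(\nu+1)x^2-\dots+(-\nu)!\,x^{-\nu}$ are polynomials (hence analytic at the origin); (2) otherwise $\hat\psi(x)=\sum_{n\ge0}(\nu)^{(n)}x^n$ and $\hat\varphi(x)=\sum_{n\ge0}(-1)^n(\nu)^{(n)}x^n$ are divergent series.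
   Context: $\partial=d/dx$; the initial equation is $L_3L_2L_1y=0$ with $L_1=\partial-\frac1{x^2}$, $L_2=\partial-\frac{\nu-2}{x}-\frac2{x^2}$, $L_3=\partial-\frac{\nu-4}x$. A (formal) fundamental matrix of the equation means one of the system $Y'=A(x)Y$ with $A(x)=\begin{pmatrix}1/x^2&1&0\\0&\frac{\nu-2}x+\frac2{x^2}&1\\0&0&\frac{\nu-4}x\end{pmatrix}$ (equivalently $Y=(y,L_1y,L_2L_1y)^T$). $(\nu)^{(n)}=\nu(\nu+1)\cdots(\nu+n-1)$, $(\nu)^{(0)}=1$. *)

(* Defs.v *)
From HB Require Import structures.
From mathcomp Require Import all_boot all_order all_algebra.
From mathcomp Require Import complex.
From mathcomp Require Import reals.
Set Implicit Arguments. Unset Strict Implicit. Unset Printing Implicit Defensive.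
Import Order.TTheory GRing.Theory Num.Theory.
Local Open Scope ring_scope.

Section FPS.
Variable C : comNzRingType.

Definition fps := nat -> C.

Definition fmul (f g : fps) : fps := fun n => \sum_(i < n.+1) f i * g (n - i)%N.
Definition fX (f : fps) : fps := fun n => if n is n'.+1 then f n' else 0.
Definition fderiv (f : fps) : fps := fun n => f n.+1 *+ n.+1.
Definition fconst (c : C) : fps := fun n => if n == 0%N then c else 0.

Definition fmx := 'I_3 -> 'I_3 -> fps.

(* [is_formal_fund B lam q H] : with B = x^2 A (polynomial entries), the
   formal matrix  Phi = H(x) x^Lambda exp(-Q/x),  Lambda = diag lam,
   Q = diag q, is a formal solution of  Phi' = A Phi.  Since
   Phi' = (H' + H (Lambda/x + Q/x^2)) x^Lambda exp(-Q/x), this is the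
   formal identity  x^2 H' = (x^2 A) H - H (x Lambda + Q)  (entrywise,
   coefficientwise). *)
Definition is_formal_fund (B : fmx) (lam q : 'I_3 -> C) (H : fmx) : Prop :=
  forall (i j : 'I_3) (n : nat),
    fX (fX (fderiv (H i j))) n
    = \sum_(k < 3) fmul (B i k) (H k j) n
      - (lam j * fX (H i j) n + q j * H i j n).

End FPS.

Section Problem.
Variable R : realType.
Local Notation C := (R[i]).

Definition x2A (nu : C) : fmx C := fun i j =>
  match nat_of_ord i, nat_of_ord j with
  | 0, 0 => fconst 1
  | 0, 1 => fX (fX (fconst 1))
  | 1, 1 => fun n => if n == 0%N then 2 else if n == 1%N then nu - 2 else 0
  | 1, 2 => fX (fX (fconst 1))
  | 2, 2 => fun n => if n == 1%N then nu - 4 else 0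
  | _, _ => fun _ => 0
  end.

Definition Lambda (nu : C) : 'I_3 -> C := fun j =>
  match nat_of_ord j with 0 => 0 | 1 => nu - 2 | _ => nu - 4 end.

Definition Qd : 'I_3 -> C := fun j =>
  match nat_of_ord j with 0 => 1 | 1 => 2 | _ => 0 end.

Definition Hmat (phi psi : fps C) : fmx C := fun i j =>
  match nat_of_ord i, nat_of_ord j with
  | 0, 0 | 1, 1 | 2, 2 => fconst 1
  | 0, 1 => fX (fX phi)
  | 0, 2 => fun n => (fX (fX (fX (fX psi))) n) / 2
  | 1, 2 => fun n => if n == 2%N then - (1 / 2) else 0
  | _, _ => fun _ => 0
  end.

Definition rising (nu : C) (n : nat) : C := \prod_(i < n) (nu + i%:R).

Definition divergent (f : fps C) : Prop :=
  forall z : C, z != 0 -> ~ (exists M : C, forall n, `|f n * z ^+ n| <= M).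

End Problem.

(* Main.v *)
Require Import Defs.
From HB Require Import structures.
From mathcomp Require Import all_boot all_order all_algebra.
From mathcomp Require Import complex.
From mathcomp Require Import reals.
From mathcomp Require Import ring.
From Stdlib Require Import FunctionalExtensionality.
Import Order.TTheory GRing.Theory Num.Theory.
Local Open Scope ring_scope.

Section G.
Variable C : comNzRingType.
Implicit Types f g : fps C.

Lemma fmul_ext f f' g n : (forall k, f k = f' k) -> fmul f g n = fmul f' g n.
Proof. by move=> e; apply: eq_bigr => i _; rewrite e. Qed.

Lemma fmulC1 (c : C) g n : fmul (fconst c) g n = c * g n.
Proof.
rewrite /fmul big_ord_recl /= subn0 big1 ?addr0 //.
by move=> i _; rewrite /fconst /= mul0r.
Qed.

Lemma fmul0l g n : fmul (fun _ => 0) g n = 0.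
Proof. by rewrite /fmul big1 // => i _; rewrite mul0r. Qed.

Lemma fmul0r f n : fmul f (fun _ => 0) n = 0.
Proof. by rewrite /fmul big1 // => i _; rewrite mulr0. Qed.

Lemma fmulXl f g n : fmul (fX f) g n = fX (fmul f g) n.
Proof.
case: n => [|n]; rewrite /fmul big_ord_recl /= mul0r add0r ?big_ord0 //.
Qed.

Lemma fmul_lin (a b : C) f1 f2 g n :
  fmul (fun k => a * f1 k + b * f2 k) g n = a * fmul f1 g n + b * fmul f2 g n.
Proof.
rewrite /fmul !mulr_sumr -big_split; apply: eq_bigr => i _.
by rewrite mulrDl !mulrA.
Qed.

Lemma fmul1r f n : fmul f (fconst 1) n = f n.
Proof.
rewrite /fmul big_ord_recr /= subnn mulr1 big1 ?add0r // => i _.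
by rewrite /fconst subn_eq0 leqNgt ltn_ord mulr0.
Qed.

Lemma sum3 (F : 'I_3 -> C) :
  \sum_(k < 3) F k = F (@Ordinal 3 0 isT) + F (@Ordinal 3 1 isT) + F (@Ordinal 3 2 isT).
Proof.
rewrite !big_ord_recl big_ord0 addr0 addrA.
by congr (F _ + F _ + F _); apply: val_inj.
Qed.
End G.
Section P.
Variable R : realType.
Local Notation C := (R[i]).
Variable nu : C.

Lemma x2A11 g n : fmul (x2A nu (@Ordinal 3 1 isT) (@Ordinal 3 1 isT)) g n = 2 * g n + (nu - 2) * fX g n.
Proof.
rewrite (@fmul_ext _ _ (fun k => 2 * fconst 1 k + (nu - 2) * fX (fconst 1) k)).
  by rewrite fmul_lin fmulC1 fmulXl; case: n => [|n] /=; rewrite ?fmulC1 ?mul1r.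
by case => [|[|k]] /=; rewrite ?mulr1 ?mulr0 ?addr0 ?add0r.
Qed.
Lemma x2A22 g n : fmul (x2A nu (@Ordinal 3 2 isT) (@Ordinal 3 2 isT)) g n = (nu - 4) * fX g n.
Proof.
rewrite (@fmul_ext _ _ (fun k => 0 * fconst 1 k + (nu - 4) * fX (fconst 1) k)).
  by rewrite fmul_lin fmulXl fmulC1 mul0r add0r; case: n => [|n] /=; rewrite ?fmulC1 ?mul1r.
by case => [|[|k]] /=; rewrite ?mulr1 ?mulr0 ?addr0 ?add0r ?mul0r.
Qed.

Lemma lin_solve (a b x y c : R[i]) : a = b -> x - y = c * (a - b) -> x = y.
Proof. by move=> ->; rewrite subrr mulr0 => /eqP; rewrite subr_eq0 => /eqP. Qed.

Ltac simpH := rewrite !sum3 ?x2A11 ?x2A22 /x2A /Hmat /Lambda /Qd /=;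
  rewrite ?fmulC1 ?fmul1r ?fmul0l ?fmul0r ?fmulXl /= ?fmulC1;
  rewrite /= ?fmulXl /= ?fmulC1 /fconst /= ?mul0rn ?mulr0 ?mul0r ?mulr1 ?mul1r ?addr0 ?add0r ?subrr ?subr0;
  rewrite /fderiv /= ?mul0rn ?oppr0 ?mulr0 ?mul0r ?mulr1 ?mul1r ?addr0 ?add0r ?subrr ?subr0.

Lemma fund_iff phi psi : is_formal_fund (x2A nu) (Lambda nu) (@Qd R) (Hmat phi psi) <->
  ((phi 0%N = 1 /\ forall n, phi n.+1 = - (nu + n%:R) * phi n) /\
   (psi 0%N = 1 /\ forall n, psi n.+1 = (nu + n%:R) * psi n)).
Proof.
split.
  move=> H.
  have p0 : phi 0%N = 1.
    move: (H (@Ordinal 3 0 isT) (@Ordinal 3 1 isT) 2%N); simpH.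
    by move=> e; apply: (@lin_solve _ _ _ _ 1 e); ring.
  have s0 : psi 0%N = 1.
    move: (H (@Ordinal 3 0 isT) (@Ordinal 3 2 isT) 4%N); simpH.
    move=> e; apply: (@lin_solve _ _ _ _ (-2) e); by field.
  split; split => // k.
    move: (H (@Ordinal 3 0 isT) (@Ordinal 3 1 isT) k.+3); simpH.
    by move=> e; apply: (@lin_solve _ _ _ _ 1 e); ring.
  move: (H (@Ordinal 3 0 isT) (@Ordinal 3 2 isT) k.+4.+1); simpH.
  move=> e; apply: (@lin_solve _ _ _ _ (-2) e); by field.
move=> [[p0 pS] [s0 sS]] i j n.
rewrite sum3.
case: i => [[|[|[|i]]] Hi] //; case: j => [[|[|[|j]]] Hj] //.
all: rewrite (bool_irrelevance Hi isT) (bool_irrelevance Hj isT).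
all: rewrite ?x2A11 ?x2A22.
all: rewrite /x2A /Hmat /Lambda /Qd /=.
all: rewrite ?fmulC1 ?fmul1r ?fmul0l ?fmul0r ?fmulXl /= ?fmulC1.
all: case: n => [|[|[|[|[|n]]]]]; rewrite /= ?fmulXl /= ?fmulC1 /fconst /= ?mul0rn ?mulr0 ?mul0r ?mulr1 ?mul1r ?addr0 ?add0r ?subrr ?subr0 //.
all: rewrite /fderiv /= ?mul0rn ?oppr0 ?mulr0 ?mul0r ?mulr1 ?mul1r ?addr0 ?add0r ?subrr ?subr0 //.
all: rewrite ?(pS n.+2) ?(pS 2%N) ?(pS 1%N) ?(pS 0%N) ?p0 ?(sS n) ?s0.
all: try ring.
by rewrite mulrN mulfV ?pnatr_eq0 // addNr.
Qed.
End P.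
Section D.
Variable R : realType.
Local Notation C := (R[i]).

Lemma archiC (y : C) : 0 <= y -> exists k : nat, y < k%:R.
Proof.
move=> y0; rewrite -(ger0_norm y0).
case: y {y0} => a b; rewrite normc_def /=.
set r := Num.sqrt _.
have r0 : 0 <= r by apply: sqrtr_ge0.
exists (Num.Def.archi_bound r).
by rewrite -(rmorph_nat (real_complex R)) ltcR archi_boundP.
Qed.

Lemma rising0 (nu : C) : rising nu 0 = 1.
Proof. by rewrite /rising big_ord0. Qed.
Lemma risingS (nu : C) n : rising nu n.+1 = (nu + n%:R) * rising nu n.
Proof. by rewrite /rising big_ord_recr /= mulrC. Qed.

Lemma rising_neq0 (nu : C) n : (forall m : nat, nu != - (m%:R)) -> rising nu n != 0.
Proof.
move=> h; elim: n => [|n IH]; first by rewrite rising0 oner_neq0.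
rewrite risingS mulf_neq0 // addr_eq0; exact: h.
Qed.

Lemma div_rising (nu : C) (s : nat -> C) :
  (forall m : nat, nu != - (m%:R)) ->
  (forall n, `|s n| = `|rising nu n|) -> divergent s.
Proof.
move=> hnu hs z z0 [M hM].
pose a n := `|rising nu n * z ^+ n|.
have aE n : `|s n * z ^+ n| = a n by rewrite /a !normrM hs.
have aS n : a n.+1 = `|nu + n%:R| * `|z| * a n.
  by rewrite /a risingS exprS !normrM; ring.
have zp : 0 < `|z| by rewrite normr_gt0.
have [N hN] : exists N : nat, 2 / `|z| + `|nu| < N%:R.
  by apply: archiC; rewrite addr_ge0 ?divr_ge0 ?ler0n.
have big n : (N <= n)%N -> 2 <= `|nu + n%:R| * `|z|.
  move=> Nn; rewrite -ler_pdivrMr //.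
  rewrite addrC; apply: le_trans (lerB_normD _ _).
  rewrite lerBrDr (le_trans (ltW hN)) //.
  by rewrite ger0_norm ?ler0n // ler_nat.
have aN : 0 < a N by rewrite normr_gt0 mulf_neq0 ?rising_neq0 ?expf_neq0.
have grow k : (k.+1)%:R * a N <= a (N + k)%N.
  elim: k => [|k IH]; first by rewrite mul1r addn0.
  rewrite addnS aS.
  apply: le_trans (_ : 2 * a (N + k)%N <= _); last first.
    by rewrite ler_wpM2r // ?normr_ge0 // big // leq_addr.
  apply: le_trans (_ : 2 * ((k.+1)%:R * a N) <= _); last first.
    by rewrite ler_wpM2l.
  rewrite mulrA; apply: ler_wpM2r; first exact: ltW.
  by rewrite -natrM ler_nat mul2n -addnn addSn ltnS addnS ltnS leq_addl.
have [k hk] : exists k : nat, M / a N < k%:R.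
  apply: archiC; apply: divr_ge0; last exact: ltW.
  exact: le_trans (normr_ge0 _) (hM 0%N).
have := hM (N + k)%N; rewrite aE => hMk.
have : M < M.
  apply: lt_le_trans hMk.
  rewrite ltr_pdivrMr // in hk.
  apply: (lt_le_trans hk); apply: le_trans (grow k).
  by apply: ler_wpM2r; [exact: ltW | rewrite ler_nat].
by rewrite ltxx.
Qed.
End D.
Section M.
Variable R : realType.
Local Notation C := (R[i]).

Lemma rec_sol (nu : C) (phi psi : fps C) :
  ((phi 0%N = 1 /\ forall n, phi n.+1 = - (nu + n%:R) * phi n) /\
   (psi 0%N = 1 /\ forall n, psi n.+1 = (nu + n%:R) * psi n)) ->
  forall n, psi n = rising nu n /\ phi n = (-1) ^+ n * rising nu n.
Proof.
move=> [[p0 pS] [s0 sS]]; elim=> [|n [IH1 IH2]].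
  by rewrite rising0 p0 s0 expr0 mulr1.
by rewrite pS sS risingS IH1 IH2 exprS; split => //; ring.
Qed.

Lemma rising_zero (m n : nat) : (m < n)%N -> rising (- (m%:R) : C) n = 0.
Proof.
elim: n => [//|n IH]; rewrite ltnS leq_eqVlt => /orP [/eqP ->|h].
  by rewrite risingS addNr mul0r.
by rewrite risingS IH // mulr0.
Qed.

Lemma rising_m (m : nat) : rising (- (m%:R) : C) m = (-1) ^+ m * (m`!)%:R.
Proof.
elim: m => [|m IH]; first by rewrite rising0 expr0 mulr1.
rewrite /rising big_ord_recl /=.
rewrite (eq_bigr (fun i : 'I_m => - m%:R + i%:R)); last first.
  by move=> i _; rewrite /bump /= add1n !mulrS; ring.
rewrite -/(rising _ _) IH factS natrM exprS addr0; ring.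
Qed.
End M.

Theorem mainTheorem8 (R : realType) (nu : R[i]) :
  (exists! pp : fps R[i] * fps R[i],
      is_formal_fund (x2A nu) (Lambda nu) (@Qd R) (Hmat pp.1 pp.2))
  /\
  (forall phi psi : fps R[i],
     is_formal_fund (x2A nu) (Lambda nu) (@Qd R) (Hmat phi psi) ->
     (forall n, psi n = rising nu n /\ phi n = (-1) ^+ n * rising nu n)
     /\
     (forall m : nat, nu = - (m%:R) ->
        (forall n, (m < n)%N -> psi n = 0 /\ phi n = 0)
        /\ psi m = (-1) ^+ m * (m`!)%:R /\ phi m = (m`!)%:R)
     /\
     ((forall m : nat, nu != - (m%:R)) ->
        divergent psi /\ divergent phi)).
Proof.
split.
  exists ((fun n => (-1) ^+ n * rising nu n), (fun n => rising nu n)); split.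
    apply/fund_iff => /=; rewrite rising0 expr0 mulr1.
    split; (split; first by []) => n.
      by rewrite risingS exprS; ring.
    by rewrite risingS.
  move=> [p s] /fund_iff /rec_sol h /=.
  by congr pair; apply: functional_extensionality => n; case: (h n).
move=> phi psi /fund_iff /rec_sol h; split => //; split.
  move=> m nuE; split.
    by move=> n mn; case: (h n) => -> ->; rewrite nuE rising_zero // mulr0.
  case: (h m) => -> ->; rewrite nuE rising_m; split => //.
  by rewrite mulrA -exprMn mulrNN mulr1 expr1n mul1r.
move=> hnu; split; apply: (@div_rising R nu _ hnu) => n; case: (h n) => e1 e2.
  by rewrite e1.
by rewrite e2 normrM normrX normrN1 expr1n mul1r.
Qed.
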